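(* Let $g:\mathbb{C}\to\mathbb{C}$ be holomorphic at $0$ with $g(0)=0$ and $g'(0)\neq 0$, let $\varphi:\mathbb{N}\to\mathbb{C}\setminus\{0\}$, and let $a\neq 0$ be a real number. Let $(P_n(x))_{n\ge 0}$ be a sequence of Appell polynomials of type $(g,\varphi)$ with generating function $f$, i.e. $f$ is holomorphic at $0$, $f(0)\neq 0$, and $$\sum_{n\ge 0}P_n(x)\frac{t^n}{\varphi(0)\varphi(1)\cdots\varphi(n)}=f(t)e^{x g(t)}$$ for all $x$ and all $t$ near $0$. Then $P_n(a-x)=(-1)^nP_n(x)$ for all $n\ge0$ and all $x$ if and only if both $g$ and the function $t\mapsto \left(e^{a g(t)}-1\right)f(t)$ are odd.
   Context: Here $\mathbb{N}=\{0,1,2,\dots\}$. A sequence of Appell polynomials of type $(g,\varphi)$ is a sequence of polynomials for which some $f$ holomorphic at $0$ with $f(0)\ne0$ satisfies the displayed identity. *)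

(* Defs.v *)
From Stdlib Require Import Reals List.
From Coquelicot Require Import Coquelicot.
Open Scope C_scope.

Definition Cexp (z : C) : C :=
  (exp (Re z) * cos (Im z), exp (Re z) * sin (Im z))%R.

(* Polynomials over C as coefficient lists (constant term first). *)
Definition Peval (p : list C) (x : C) : C :=
  fold_right (fun c acc => c + x * acc) 0 p.

Definition holo_at (f : C -> C) (z0 : C) : Prop :=
  exists r : R, (0 < r)%R /\
    forall z : C, (Cmod (z - z0) < r)%R -> ex_derive (K := C_AbsRing) (V := C_NormedModule) f z.

Definition odd_near0 (h : C -> C) : Prop :=
  exists r : R, (0 < r)%R /\ forall t : C, (Cmod t < r)%R -> h (- t) = - h t.

Fixpoint phiprod (phi : nat -> C) (n : nat) : C :=
  match n with
  | O => phi O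
  | S m => phiprod phi m * phi (S m)
  end.

Definition appell_gen (g : C -> C) (phi : nat -> C) (P : nat -> list C) (f : C -> C) : Prop :=
  holo_at f 0 /\ f 0 <> 0 /\
  forall x : C, exists r : R, (0 < r)%R /\
    forall t : C, (Cmod t < r)%R ->
      is_series (K := C_AbsRing) (V := C_NormedModule)
        (fun n => Peval (P n) x * t ^ n / phiprod phi n)
        (f t * Cexp (x * g t)).

(* Main.v *)
Require Import Defs.
From Stdlib Require Import Reals List Lra Classical.
From Coquelicot Require Import Coquelicot.
Open Scope C_scope.

Lemma real_coef_zero (a : nat -> R) (r : R) : (0 < r)%R ->
  (forall s : R, (Rabs s < r)%R -> is_series (K := R_AbsRing) (V := R_NormedModule) (fun n => a n * s ^ n)%R 0%R) ->
  forall n, a n = 0%R.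
Proof.
  intros Hr H.
  assert (Hrad : Rbar_lt 0 (CV_radius a)).
  { destruct (Rbar_lt_le_dec 0 (CV_radius a)) as [h|h]; auto.
    exfalso. apply (CV_disk_outside a (r/2)).
    - eapply Rbar_le_lt_trans. exact h. simpl. rewrite Rabs_pos_eq; lra.
    - apply ex_series_lim_0. exists 0%R. apply H. rewrite Rabs_pos_eq; lra. }
  intros n.
  assert (Hz : Rbar_lt 0 (CV_radius (fun _ => 0%R))).
  { rewrite CV_radius_const_0. simpl. auto. }
  pose proof (PSeries_ext_recip a (fun _ => 0%R) n Hrad Hz) as E.
  apply E. exists (mkposreal r Hr). intros y Hy.
  rewrite PSeries_const_0. unfold PSeries. apply is_series_unique. apply H.
  change (Rabs (y - 0) < r)%R in Hy. rewrite Rminus_0_r in Hy. exact Hy.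
Qed.

Lemma sum_n_Re (u : nat -> C) n : sum_n (fun k => Re (u k)) n = Re (sum_n (G := C_AbelianMonoid) u n).
Proof. induction n. rewrite !sum_O. reflexivity. rewrite !sum_Sn, IHn. reflexivity. Qed.
Lemma sum_n_Im (u : nat -> C) n : sum_n (fun k => Im (u k)) n = Im (sum_n (G := C_AbelianMonoid) u n).
Proof. induction n. rewrite !sum_O. reflexivity. rewrite !sum_Sn, IHn. reflexivity. Qed.

Lemma is_series_Re (u : nat -> C) l :
  is_series (K := C_AbsRing) (V := C_NormedModule) u l ->
  is_series (K := R_AbsRing) (V := R_NormedModule) (fun n => Re (u n)) (Re l).
Proof.
  unfold is_series. intros H.
  eapply filterlim_ext. intros n; symmetry; apply sum_n_Re.
  intros P [eps HP]. apply (H (fun z => P (Re z))). exists eps. intros y Hy. apply HP. destruct Hy as [Hy1 _]. exact Hy1.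
Qed.
Lemma is_series_Im (u : nat -> C) l :
  is_series (K := C_AbsRing) (V := C_NormedModule) u l ->
  is_series (K := R_AbsRing) (V := R_NormedModule) (fun n => Im (u n)) (Im l).
Proof.
  unfold is_series. intros H.
  eapply filterlim_ext. intros n; symmetry; apply sum_n_Im.
  intros P [eps HP]. apply (H (fun z => P (Im z))). exists eps. intros y Hy. apply HP. destruct Hy as [_ Hy1]. exact Hy1.
Qed.

Lemma coef_zero (d : nat -> C) (r : R) : (0 < r)%R ->
  (forall t : C, (Cmod t < r)%R -> is_series (K := C_AbsRing) (V := C_NormedModule) (fun n => d n * t ^ n) (RtoC 0)) ->
  forall n, d n = 0.
Proof.
  intros Hr H n.
  assert (HR : forall s, (Rabs s < r)%R -> is_series (K := C_AbsRing) (V := C_NormedModule) (fun n => d n * RtoC (s ^ n)) (RtoC 0)).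
  { intros s Hs. eapply is_series_ext. 2: apply (H (RtoC s)). intros k. rewrite RtoC_pow. reflexivity.
    rewrite Cmod_R. exact Hs. }
  assert (H1 : forall k, Re (d k) = 0%R).
  { apply (real_coef_zero _ r Hr). intros s Hs. pose proof (is_series_Re _ _ (HR s Hs)) as Hq.
    eapply is_series_ext. 2: exact Hq. intros k. simpl. unfold Re, Im. ring. }
  assert (H2 : forall k, Im (d k) = 0%R).
  { apply (real_coef_zero _ r Hr). intros s Hs. pose proof (is_series_Im _ _ (HR s Hs)) as Hq.
    eapply is_series_ext. 2: exact Hq. intros k. simpl. unfold Re, Im. ring. }
  specialize (H1 n). specialize (H2 n). destruct (d n) as [x y]. simpl in *. subst. reflexivity.
Qed.

Lemma Cexp_add u v : Cexp (u + v) = Cexp u * Cexp v.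
Proof.
  unfold Cexp. destruct u as [x y], v as [x' y']. simpl.
  rewrite exp_plus, cos_plus, sin_plus.
  apply injective_projections; simpl; ring.
Qed.

Lemma Cexp_0 : Cexp (RtoC 0) = RtoC 1.
Proof. unfold Cexp. simpl. rewrite exp_0, cos_0, sin_0. apply injective_projections; simpl; ring. Qed.

Lemma Cexp_opp_r u : Cexp u * Cexp (- u) = RtoC 1.
Proof. rewrite <- Cexp_add. replace (u + - u) with (RtoC 0) by ring. apply Cexp_0. Qed.

Lemma Cexp_small_1 z : (Cmod z < 1)%R -> Cexp z = RtoC 1 -> z = RtoC 0.
Proof.
  intros Hz E. destruct z as [x y].
  pose proof (Rmax_Cmod (x, y)) as Hm. simpl in Hm.
  assert (Hy : (Rabs y < 1)%R).
  { eapply Rle_lt_trans. 2: exact Hz. eapply Rle_trans. 2: exact Hm. apply Rmax_r. }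
  unfold Cexp in E. simpl in E. injection E as E1 E2.
  pose proof (exp_pos x) as Hx.
  assert (Hs : sin y = 0%R).
  { destruct (Rmult_integral _ _ E2); auto. lra. }
  pose proof PI2_3_2.
  assert (y = 0%R).
  { destruct (Rtotal_order y 0) as [h|[h|h]]; auto.
    - exfalso. pose proof (sin_gt_0 (- y)). rewrite sin_neg in H0. apply Rabs_def2 in Hy. lra.
    - exfalso. pose proof (sin_gt_0 y). apply Rabs_def2 in Hy. lra. }
  subst y. rewrite cos_0, Rmult_1_r in E1. rewrite <- exp_0 in E1. apply exp_inv in E1. subst. reflexivity.
Qed.

Lemma Cmult_cancel_l c x y : c <> RtoC 0 -> c * x = c * y -> x = y.
Proof.
  intros Hc E. replace x with (/ c * (c * x)) by (field; auto).
  rewrite E. field; auto.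
Qed.

Lemma Cmult_integral' c x : c <> RtoC 0 -> c * x = RtoC 0 -> x = RtoC 0.
Proof. intros Hc E. apply (Cmult_cancel_l c); auto. rewrite E. ring. Qed.

Lemma series_unique_C (u : nat -> C) l1 l2 :
  is_series (K := C_AbsRing) (V := C_NormedModule) u l1 ->
  is_series (K := C_AbsRing) (V := C_NormedModule) u l2 -> l1 = l2.
Proof.
  intros H1 H2.
  pose proof (is_series_unique _ _ (is_series_Re _ _ H1)) as R1.
  pose proof (is_series_unique _ _ (is_series_Re _ _ H2)) as R2.
  pose proof (is_series_unique _ _ (is_series_Im _ _ H1)) as I1.
  pose proof (is_series_unique _ _ (is_series_Im _ _ H2)) as I2.
  apply injective_projections; [change (Re l1 = Re l2) | change (Im l1 = Im l2)]; congruence.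
Qed.

Lemma cont_eps (h : C -> C) z0 : ex_derive (K := C_AbsRing) (V := C_NormedModule) h z0 ->
  forall eps, (0 < eps)%R -> exists d, (0 < d)%R /\ forall t, (Cmod (t - z0) < d)%R -> (Cmod (h t - h z0) < eps)%R.
Proof.
  intros Hd eps Heps. pose proof (ex_derive_continuous h z0 Hd) as Hc.
  assert (Hl : locally (h z0) (ball_norm (h z0) (mkposreal eps Heps))).
  { apply (locally_le_locally_norm (K := C_AbsRing) (V := C_NormedModule)). apply locally_norm_ball_norm. }
  specialize (Hc _ Hl).
  destruct Hc as [d Hd'].
  exists d. split. apply cond_pos. intros t Ht. apply (Hd' t). exact Ht.
Qed.

Lemma deriv_nz (g : C -> C) l : is_derive (K := C_AbsRing) (V := C_NormedModule) g (RtoC 0) l -> l <> RtoC 0 ->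
  exists d, (0 < d)%R /\ forall t, (Cmod t < d)%R -> g t = g (RtoC 0) -> t = RtoC 0.
Proof.
  intros [_ Hd] Hl.
  assert (Hlp : (0 < Cmod l)%R).
  { destruct (Rle_lt_or_eq_dec 0 (Cmod l) (Cmod_ge_0 l)); auto. exfalso. apply Hl. apply Cmod_eq_0. auto. }
  specialize (Hd (RtoC 0) (fun P HP => HP)).
  assert (He : (0 < Cmod l / 2)%R) by lra.
  specialize (Hd (mkposreal _ He)).
  destruct Hd as [d Hd'].
  exists d. split. apply cond_pos. intros t Ht E.
  assert (Hb : ball (M := AbsRing_UniformSpace C_AbsRing) (RtoC 0) d t).
  { change (Cmod (t - RtoC 0) < d)%R. replace (t - RtoC 0) with t by ring. exact Ht. }
  specialize (Hd' t Hb). simpl in Hd'.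
  change (Cmod (g t - g (RtoC 0) - (t - RtoC 0) * l) <= Cmod l / 2 * Cmod (t - RtoC 0))%R in Hd'.
  rewrite E in Hd'. replace (g (RtoC 0) - g (RtoC 0) - (t - RtoC 0) * l) with (- (t * l)) in Hd' by ring.
  replace (t - RtoC 0) with t in Hd' by ring.
  rewrite Cmod_opp, Cmod_mult in Hd'.
  pose proof (Cmod_ge_0 t).
  assert (Cmod t = 0%R) by nra. apply Cmod_eq_0. auto.
Qed.

Lemma phiprod_nz phi : (forall n, phi n <> RtoC 0) -> forall n, phiprod phi n <> RtoC 0.
Proof.
  intros H n. induction n; simpl; auto.
  intro E. apply (H (S n)). apply (Cmult_integral' (phiprod phi n)); auto.
Qed.

Lemma Cpow_opp t n : (- t) ^ n = (RtoC (-1)) ^ n * t ^ n.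
Proof. replace (- t) with ((RtoC (-1)) * t). apply Cpow_mult_l.
  apply injective_projections; simpl; ring. Qed.
Lemma is_series_eq_lim (u : nat -> C) l l' : is_series (K:=C_AbsRing) (V:=C_NormedModule) u l -> l = l' ->
  is_series (K:=C_AbsRing) (V:=C_NormedModule) u l'.
Proof. intros H E; subst; auto. Qed.
Ltac toC := match goal with |- ?A = ?B => change (@eq C A B) end.

Theorem mainTheorem3 (g : C -> C) (phi : nat -> C) (a : R) (P : nat -> list C) (f : C -> C) :
  holo_at g 0 -> g 0 = 0 ->
  (exists l : C, is_derive (K := C_AbsRing) (V := C_NormedModule) g (RtoC 0) l /\ l <> 0) ->
  (forall n : nat, phi n <> 0) ->
  a <> 0%R ->
  appell_gen g phi P f ->
  ((forall (n : nat) (x : C), Peval (P n) (RtoC a - x) = (- 1) ^ n * Peval (P n) x)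
   <-> (odd_near0 g /\ odd_near0 (fun t => (Cexp (RtoC a * g t) - 1) * f t))).
Proof.
  intros _ Hg0 [l [Hl Hlnz]] Hphi Ha [[rf [Hrf Hfd]] [Hf0 Hser]].
  assert (Hfd0 : ex_derive (K := C_AbsRing) (V := C_NormedModule) f (RtoC 0)).
  { apply Hfd. replace (RtoC 0 - RtoC 0) with (RtoC 0) by ring. rewrite Cmod_0. auto. }
  assert (Hgd0 : ex_derive (K := C_AbsRing) (V := C_NormedModule) g (RtoC 0)) by (exists l; exact Hl).
  assert (Hfnz : exists d, (0 < d)%R /\ forall t, (Cmod t < d)%R -> f t <> RtoC 0).
  { assert (Hp : (0 < Cmod (f (RtoC 0)))%R).
    { destruct (Rle_lt_or_eq_dec 0 _ (Cmod_ge_0 (f (RtoC 0)))); auto. exfalso. apply Hf0. apply Cmod_eq_0. auto. }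
    destruct (cont_eps f (RtoC 0) Hfd0 _ Hp) as [d [Hd Hd']]. exists d. split; auto.
    intros t Ht E. specialize (Hd' t). replace (t - RtoC 0) with t in Hd' by ring.
    specialize (Hd' Ht). rewrite E in Hd'. replace (RtoC 0 - f (RtoC 0)) with (- f (RtoC 0)) in Hd' by ring.
    rewrite Cmod_opp in Hd'. lra. }
  assert (Hgs : forall eps, (0 < eps)%R -> exists d, (0 < d)%R /\ forall t, (Cmod t < d)%R -> (Cmod (g t) < eps)%R).
  { intros eps He. destruct (cont_eps g (RtoC 0) Hgd0 _ He) as [d [Hd Hd']]. exists d. split; auto.
    intros t Ht. specialize (Hd' t). replace (t - RtoC 0) with t in Hd' by ring.
    rewrite Hg0 in Hd'. replace (g t - RtoC 0) with (g t) in Hd' by ring. auto. }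
  split.
  - intros Sym.
    assert (Key : forall x, exists r, (0 < r)%R /\ forall t, (Cmod t < r)%R ->
              f t * Cexp ((RtoC a - x) * g t) = f (- t) * Cexp (x * g (- t))).
    { intros x. destruct (Hser (RtoC a - x)) as [r1 [Hr1 H1]]. destruct (Hser x) as [r2 [Hr2 H2]].
      exists (Rmin r1 r2). split. apply Rmin_pos; auto. intros t Ht.
      apply (series_unique_C (fun n => Peval (P n) (RtoC a - x) * t ^ n / phiprod phi n)).
      - apply H1. eapply Rlt_le_trans. exact Ht. apply Rmin_l.
      - eapply is_series_ext. 2: { apply (H2 (- t)). rewrite Cmod_opp. eapply Rlt_le_trans. exact Ht. apply Rmin_r. }
        intros n. toC. rewrite Sym, Cpow_opp. unfold Cdiv; ring. }
    destruct (Key (RtoC 0)) as [r0 [Hr0 K0]]. destruct (Key (RtoC 1)) as [r1 [Hr1 K1]].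
    assert (K0' : forall t, (Cmod t < r0)%R -> f (- t) = f t * Cexp (RtoC a * g t)).
    { intros t Ht. specialize (K0 t Ht).
      replace (RtoC 0 * g (- t)) with (RtoC 0) in K0 by ring.
      replace (RtoC a - RtoC 0) with (RtoC a) in K0 by ring. rewrite Cexp_0 in K0.
      transitivity (f (- t) * RtoC 1). ring. rewrite <- K0. reflexivity. }
    destruct Hfnz as [df [Hdf Hfnz]].
    assert (Hh : (0 < / 2)%R) by lra.
    destruct (Hgs _ Hh) as [dg [Hdg Hgs']].
    set (R0 := Rmin (Rmin r0 r1) (Rmin df dg)).
    assert (HR0 : (0 < R0)%R) by (repeat apply Rmin_pos; auto).
    assert (Hb : forall t, (Cmod t < R0)%R -> (Cmod t < r0)%R /\ (Cmod t < r1)%R /\ (Cmod t < df)%R /\ (Cmod t < dg)%R).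
    { intros t Ht. unfold R0 in Ht.
      pose proof (Rmin_l (Rmin r0 r1) (Rmin df dg)). pose proof (Rmin_r (Rmin r0 r1) (Rmin df dg)).
      pose proof (Rmin_l r0 r1). pose proof (Rmin_r r0 r1). pose proof (Rmin_l df dg). pose proof (Rmin_r df dg).
      repeat split; lra. }
    assert (Godd : forall t, (Cmod t < R0)%R -> g (- t) = - g t).
    { intros t Ht. destruct (Hb t Ht) as [T0 [T1 [T2 T3]]].
      specialize (K1 t T1). rewrite (K0' t T0) in K1. rewrite <- Cmult_assoc in K1.
      apply Cmult_cancel_l in K1; [| apply Hfnz; auto].
      assert (Hs : Cexp (g t + g (- t)) = RtoC 1).
      { replace (g t + g (- t)) with ((RtoC a * g t + RtoC 1 * g (- t)) + - ((RtoC a - RtoC 1) * g t)) by ring.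
        rewrite Cexp_add, Cexp_add, <- K1. apply Cexp_opp_r. }
      apply Cexp_small_1 in Hs.
      + replace (g (- t)) with ((g t + g (- t)) - g t) by ring. rewrite Hs. ring.
      + eapply Rle_lt_trans. apply Cmod_triangle.
        pose proof (Hgs' t T3). assert (Cmod (- t) < dg)%R by (rewrite Cmod_opp; auto).
        pose proof (Hgs' (- t) H0). lra. }
    split.
    + exists R0. split; auto.
    + exists R0. split; auto. intros t Ht. cbv beta.
      destruct (Hb t Ht) as [T0 [T1 [T2 T3]]].
      rewrite (Godd t Ht), (K0' t T0).
      replace (RtoC a * - g t) with (- (RtoC a * g t)) by ring.
      pose proof (Cexp_opp_r (RtoC a * g t)) as EE.
      transitivity (f t * (Cexp (RtoC a * g t) * Cexp (- (RtoC a * g t))) - f t * Cexp (RtoC a * g t)).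
      ring. rewrite EE. ring.
  - intros [[r1 [Hr1 Godd]] [r2 [Hr2 Hodd]]].
    assert (Hae : (0 < / (Rabs a + 1))%R).
    { apply Rinv_0_lt_compat. pose proof (Rabs_pos a). lra. }
    destruct (Hgs _ Hae) as [dg [Hdg Hgs']].
    destruct (deriv_nz g l Hl Hlnz) as [dd [Hdd Hnz]].
    set (R0 := Rmin (Rmin r1 r2) (Rmin dg dd)).
    assert (HR0 : (0 < R0)%R) by (repeat apply Rmin_pos; auto).
    assert (Hb : forall t, (Cmod t < R0)%R -> (Cmod t < r1)%R /\ (Cmod t < r2)%R /\ (Cmod t < dg)%R /\ (Cmod t < dd)%R).
    { intros t Ht. unfold R0 in Ht.
      pose proof (Rmin_l (Rmin r1 r2) (Rmin dg dd)). pose proof (Rmin_r (Rmin r1 r2) (Rmin dg dd)).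
      pose proof (Rmin_l r1 r2). pose proof (Rmin_r r1 r2). pose proof (Rmin_l dg dd). pose proof (Rmin_r dg dd).
      repeat split; lra. }
    assert (Hanz : RtoC a <> RtoC 0).
    { intro E. apply Ha. injection E. auto. }
    assert (F : forall t, (Cmod t < R0)%R -> f (- t) = f t * Cexp (RtoC a * g t)).
    { intros t Ht. destruct (Hb t Ht) as [T1 [T2 [T3 T4]]].
      specialize (Hodd t T2). cbv beta in Hodd. rewrite (Godd t T1) in Hodd.
      replace (RtoC a * - g t) with (- (RtoC a * g t)) in Hodd by ring.
      set (u := RtoC a * g t) in *.
      assert (HZ : (Cexp u - RtoC 1) * (f (- t) - f t * Cexp u) = RtoC 0).
      { transitivity (- Cexp u * ((Cexp (- u) - 1) * f (- t) + (Cexp u - 1) * f t)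
                      + (Cexp u * Cexp (- u) - 1) * f (- t)).
        ring. rewrite Hodd, Cexp_opp_r. ring. }
      destruct (classic (Cexp u = RtoC 1)) as [E|E].
      - apply Cexp_small_1 in E.
        + unfold u in E. apply Cmult_integral' in E; auto.
          assert (t = RtoC 0) by (apply Hnz; auto; rewrite Hg0; auto). subst t.
          rewrite Copp_0. unfold u. rewrite Hg0, Cmult_0_r, Cexp_0. ring.
        + unfold u. rewrite Cmod_mult, Cmod_R. pose proof (Hgs' t T3).
          pose proof (Rabs_pos a). pose proof (Cmod_ge_0 (g t)).
          apply (Rmult_lt_compat_l (Rabs a + 1)) in H; [|lra].
          rewrite Rinv_r in H; [|lra]. nra.
      - assert (Hc : Cexp u - RtoC 1 <> RtoC 0).
        { intro H. apply E. replace (Cexp u) with (Cexp u - RtoC 1 + RtoC 1) by ring. rewrite H. ring. }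
        apply Cmult_integral' in HZ; auto.
        replace (f (- t)) with ((f (- t) - f t * Cexp u) + f t * Cexp u) by ring. rewrite HZ. ring. }
    intros n x.
    destruct (Hser (RtoC a - x)) as [q1 [Hq1 H1]]. destruct (Hser x) as [q2 [Hq2 H2]].
    set (d := fun n => (Peval (P n) (RtoC a - x) - (RtoC (-1)) ^ n * Peval (P n) x) / phiprod phi n).
    assert (Hd : forall n, d n = RtoC 0).
    { apply (coef_zero d (Rmin R0 (Rmin q1 q2))). repeat apply Rmin_pos; auto.
      intros t Ht.
      pose proof (Rmin_l R0 (Rmin q1 q2)). pose proof (Rmin_r R0 (Rmin q1 q2)).
      pose proof (Rmin_l q1 q2). pose proof (Rmin_r q1 q2).
      assert (T0 : (Cmod t < R0)%R) by lra.
      assert (T1 : (Cmod t < q1)%R) by lra.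
      assert (T2 : (Cmod (- t) < q2)%R) by (rewrite Cmod_opp; lra).
      destruct (Hb t T0) as [U1 _].
      pose proof (is_series_minus _ _ _ _ (H1 t T1) (H2 (- t) T2)) as HS.
      assert (HL : plus (f t * Cexp ((RtoC a - x) * g t)) (opp (f (- t) * Cexp (x * g (- t)))) = RtoC 0).
      { change (f t * Cexp ((RtoC a - x) * g t) - f (- t) * Cexp (x * g (- t)) = RtoC 0).
        rewrite (F t T0), (Godd t U1).
        transitivity (f t * Cexp ((RtoC a - x) * g t) - f t * (Cexp (RtoC a * g t) * Cexp (x * - g t))).
        ring. rewrite <- Cexp_add. replace (RtoC a * g t + x * - g t) with ((RtoC a - x) * g t) by ring. ring. }
      eapply is_series_ext. 2: exact (is_series_eq_lim _ _ _ HS HL).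
      intros k. toC. change (Peval (P k) (RtoC a - x) * t ^ k / phiprod phi k - Peval (P k) x * (- t) ^ k / phiprod phi k = d k * t ^ k).
      unfold d. rewrite Cpow_opp. unfold Cdiv. ring. }
    specialize (Hd n). unfold d in Hd.
    assert (Hz : Peval (P n) (RtoC a - x) - (RtoC (-1)) ^ n * Peval (P n) x = RtoC 0).
    { replace (Peval (P n) (RtoC a - x) - (RtoC (-1)) ^ n * Peval (P n) x) with
        (phiprod phi n * ((Peval (P n) (RtoC a - x) - (RtoC (-1)) ^ n * Peval (P n) x) / phiprod phi n)).
      rewrite Hd. ring. field. apply phiprod_nz. auto. }
    replace (Peval (P n) (RtoC a - x)) with ((Peval (P n) (RtoC a - x) - (RtoC (-1)) ^ n * Peval (P n) x) + (RtoC (-1)) ^ n * Peval (P n) x) by ring.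
    rewrite Hz. ring.
Qed.
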